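(* For $x\in\mathbb X$ let $C_W(x)=1+\sum_{X\Subset\mathbb X:\,\{x\}\subsetneq X}|W(X)-1|\in[1,\infty]$ and $\overline C_W=\sup_{y\in\mathbb X}C_W(y)$. Suppose that, for all $x\in\mathbb X$, \[ |z(x)W(x)|\prod_{X\Subset\mathbb X:\,\{x\}\subsetneq X}\max\{|W(X)|,1\}\le\frac{1}{\overline C_W\,\mathrm e}, \] with the convention $1/\infty=\infty^{-1}=0$. Let $\alpha\equiv\overline C_W^{-1}\le 1$ (constant) and $r\equiv\frac{\alpha}{1+\alpha}\le\frac12$. Then, for all $x\in\mathbb X$, \[ |z(x)|\prod_{\substack{X\Subset\mathbb X:\\ x\in X}}\max\Big\{|W(X)|,\ 1+|W(X)-1|\,\alpha^{|S|}\ \Big|\ \varnothing\neq S\subset X\setminus\{x\}\Big\}\le r . \]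
   Context: $\mathbb X$ is a finite or countably infinite set; $X\Subset\mathbb X$ means $X$ is a finite subset of $\mathbb X$. Fix $z:\mathbb X\to\mathbb C$ and $W:\{X\Subset\mathbb X\}\to\mathbb C$; write $W(x)=W(\{x\})$. In the maximum, the max is over $|W(X)|$ together with all numbers $1+|W(X)-1|\alpha^{|S|}$ for nonempty $S\subset X\setminus\{x\}$ (for $X=\{x\}$ the factor is $|W(x)|$). Products of nonnegative numbers over infinite index sets are understood in $[0,\infty]$. *)

(* Defs.v *)
From HB Require Import structures.
From mathcomp Require Import all_boot all_order all_algebra.
From mathcomp Require Import finmap.
From mathcomp Require Import all_classical all_reals.
From mathcomp Require Import all_analysis.
From mathcomp Require Import complex.
Set Implicit Arguments. Unset Strict Implicit. Unset Printing Implicit Defensive.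
Import Order.TTheory GRing.Theory Num.Theory.
Local Open Scope ring_scope.
Local Open Scope fset_scope.
Local Open Scope classical_set_scope.

Section Defs.
Variables (R : realType) (T : countType).
Variables (W : {fset T} -> R[i]).

Definition cabs (u : R[i]) : R := ComplexField.Normc.normc u.

Definition supersets (x : T) : set {fset T} :=
  [set X : {fset T} | x \in X /\ X != [fset x]].

Definition CW (x : T) : \bar R :=
  (1%:E + \esum_(X in supersets x) (cabs (W X - 1))%:E)%E.

Definition CWbar : \bar R := ereal_sup [set CW y | y in [set: T]].

Definition alphaW : R :=
  match CWbar with EFin c => c^-1 | _ => 0 end.

Definition rW : R := alphaW / (1 + alphaW).

Definition boundW : \bar R :=
  match CWbar with EFin c => ((c * expR 1)^-1)%:E | _ => 0%E end.

Definition maxfactor (a : R) (x : T) (X : {fset T}) : R :=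
  \big[Num.max/cabs (W X)]_(S <- fpowerset (X `\ x)%fset | S != fset0)
     (1 + cabs (W X - 1) * a ^+ #|` S|)%R.
End Defs.

(* Product over a (possibly infinite) index set A of factors f i >= 1, in
   [0, ∞]: the supremum of the finite partial products. *)
Definition eprod_ge1 (R : realType) (I : choiceType) (A : set I) (f : I -> R)
  : \bar R :=
  ereal_sup [set ((\prod_(i <- F) f i)%:E)%E | F in [set F : {fset I} | [set` F] `<=` A]].

(* Main.v *)
Require Import Defs.
From HB Require Import structures.
From mathcomp Require Import all_boot all_order all_algebra.
From mathcomp Require Import finmap.
From mathcomp Require Import all_classical all_reals.
From mathcomp Require Import all_analysis.
From mathcomp Require Import complex.
From mathcomp Require Import lra.
Import Order.TTheory GRing.Theory Num.Theory.
Local Open Scope ring_scope.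
Local Open Scope fset_scope.
Local Open Scope classical_set_scope.

Section Helpers.
Variables (R : realType) (T : countType) (W : {fset T} -> R[i]).

Lemma cabs_ge0 (u : R[i]) : 0 <= cabs u.
Proof. by case: u => a b; rewrite /cabs /=; apply: sqrtr_ge0. Qed.

Lemma cabsM (u v : R[i]) : cabs (u * v) = cabs u * cabs v.
Proof. exact: ComplexField.Normc.normcM. Qed.

Lemma mf_ge0 a x X : 0 <= maxfactor W a x X.
Proof.
rewrite /maxfactor; elim/big_rec: _ => [|S v _ hv]; first exact: cabs_ge0.
by rewrite le_max hv orbT.
Qed.

Lemma mf_le a x X : 0 <= a -> a <= 1 ->
  maxfactor W a x X <= Num.max (cabs (W X)) 1 * (1 + cabs (W X - 1) * a).
Proof.
move=> a0 a1.
set m := Num.max _ _.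
have hm1 : 1 <= m by rewrite le_max lexx orbT.
have hm : cabs (W X) <= m by rewrite le_max lexx.
have t0 := cabs_ge0 (W X - 1).
have ta : 0 <= cabs (W X - 1) * a by apply: mulr_ge0.
rewrite /maxfactor; elim/big_rec: _ => [|S v HS hv]; first by nra.
rewrite ge_max hv andbT.
have : (0 < #|` S|)%N by rewrite cardfs_gt0.
case: #|` S| => // n _.
rewrite exprS.
have hn := exprn_ile1 n a0 a1.
have hn0 : 0 <= a ^+ n by apply: exprn_ge0.
have h1 : a * a ^+ n <= a by rewrite -[X in _ <= X]mulr1; apply: ler_wpM2l.
have h2 : cabs (W X - 1) * (a * a ^+ n) <= cabs (W X - 1) * a by apply: ler_wpM2l.
nra.
Qed.

Lemma prod_exp (I : Type) (s : seq I) (f : I -> R) : (forall i, 0 <= f i) ->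
  \prod_(i <- s) (1 + f i) <= expR (\sum_(i <- s) f i).
Proof.
move=> f0; elim: s => [|i s IH]; first by rewrite !big_nil expR0.
rewrite !big_cons expRD; apply: ler_pM => //.
- by rewrite addr_ge0.
- by apply: prodr_ge0 => j _; rewrite addr_ge0.
- exact: expR_ge1Dx.
Qed.

End Helpers.
Lemma eprod_ub (R : realType) (I : choiceType) (A : set I) (f : I -> R) (F : {fset I}) :
  [set` F] `<=` A -> ((\prod_(i <- F) f i)%:E <= eprod_ge1 A f)%E.
Proof. by move=> HF; apply: ereal_sup_ubound; exists F. Qed.

Lemma esum_ub (R : realType) (I : choiceType) (A : set I) (f : I -> R) (F : {fset I}) :
  [set` F] `<=` A -> ((\sum_(i <- F) f i)%:E <= \esum_(i in A) (f i)%:E)%E.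
Proof.
move=> HF; apply: esum_ge; exists [set` F]; first by split => //; exact: finite_fset.
by rewrite -sumEFin (fsbig_seq _ _ (fset_uniq F)).
Qed.

Theorem corollary2p2 (R : realType) (T : countType)
    (z : T -> R[i]) (W : {fset T} -> R[i]) :
  (forall x : T,
     ((cabs (z x * W [fset x]))%:E *
        eprod_ge1 (supersets x) (fun X => Num.max (cabs (W X)) 1%R) <= boundW W)%E) ->
  forall x : T,
    ((cabs (z x) * cabs (W [fset x]))%:E *
       eprod_ge1 (supersets x) (maxfactor W (alphaW W) x) <= (rW W)%:E)%E.
Proof.
move=> H x; have Hx := H x; rewrite cabsM in Hx.
set p := cabs (z x) * cabs (W [fset x]) in Hx *.
have p0 : 0 <= p by rewrite mulr_ge0 ?cabs_ge0.
set tW := fun X => cabs (W X - 1).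
have esum0 : (0 <= \esum_(X in supersets x) (tW X)%:E)%E.
  by apply: esum_ge0 => X _; rewrite lee_fin cabs_ge0.
have CWx : (CW W x <= CWbar W)%E by apply: ereal_sup_ubound; exists x.
have CW1 : (1%:E <= CW W x)%E by rewrite /CW; apply: leeDl.
have eprod1 : forall f : {fset T} -> R,
    (1%:E <= eprod_ge1 (supersets x) f)%E.
  move=> f; apply: le_trans (@eprod_ub _ _ _ f fset0 _); first by rewrite big_seq_fset0.
  by move=> y /=; rewrite inE.
move: Hx CWx; rewrite /rW /alphaW /boundW.
case E: (CWbar W) => [c| |] Hx CWx.
- have c1 : 1 <= c by rewrite -lee_fin; exact: le_trans CW1 CWx.
  have c0 : 0 < c by apply: lt_le_trans c1.
  set a := c^-1.
  have a0 : 0 < a by rewrite invr_gt0.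
  have a1 : a <= 1 by rewrite invf_le1.
  have ac : a * c = 1 by rewrite mulVf // gt_eqF.
  have Hsum : forall F : {fset {fset T}}, [set` F] `<=` supersets x ->
      \sum_(X <- F) tW X <= c - 1.
    move=> F HF; have := le_trans (leeD2l 1%:E (@esum_ub _ _ _ tW _ HF)) CWx.
    by rewrite -EFinD lee_fin => h; lra.
  have Hmx : forall F : {fset {fset T}}, [set` F] `<=` supersets x ->
      p * \prod_(X <- F) Num.max (cabs (W X)) 1 <= (c * expR 1)^-1.
    move=> F HF; rewrite -lee_fin EFinM; apply: le_trans Hx.
    by apply: lee_wpmul2l; [rewrite lee_fin | exact: eprod_ub].
  have [->|pn0] := eqVneq p 0.
    by rewrite mul0e lee_fin divr_ge0 // ?addr_ge0 // ltW.
  have pp : 0 < p by rewrite lt_neqAle eq_sym pn0 p0.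
  apply: (@le_trans _ _ (p%:E * (p^-1 * (a / (1 + a)))%:E)%E); last first.
    by rewrite -EFinM !mulrA divff // mul1r.
  apply: lee_wpmul2l; first by rewrite lee_fin.
  apply: ge_ereal_sup => _ [F HF <-]; rewrite lee_fin ler_pdivlMl //.
  have step1 : \prod_(X <- F) maxfactor W a x X <=
      \prod_(X <- F) Num.max (cabs (W X)) 1 * \prod_(X <- F) (1 + tW X * a).
    rewrite -big_split /=; apply: ler_prod => X _.
    by rewrite mf_ge0 /= mf_le // ltW.
  have step2 : \prod_(X <- F) (1 + tW X * a) <= expR (a * (c - 1)).
    apply: le_trans (@prod_exp R _ F (fun X => tW X * a) _) _; first by move=> X; rewrite mulr_ge0 ?cabs_ge0 // ltW.
    rewrite ler_expR -mulr_suml mulrC; apply: ler_wpM2l; [exact: ltW | exact: Hsum].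
  have step3 : p * \prod_(X <- F) maxfactor W a x X <= (c * expR 1)^-1 * expR (a * (c - 1)).
    apply: le_trans (ler_wpM2l p0 step1) _; rewrite mulrA.
    apply: ler_pM => //; first by rewrite mulr_ge0 // prodr_ge0 // => X _; rewrite le_max ler01 orbT.
      by apply: prodr_ge0 => X _; rewrite addr_ge0 // mulr_ge0 ?cabs_ge0 // ltW.
    exact: Hmx.
  apply: le_trans step3 _.
  have -> : a * (c - 1) = 1 - a by rewrite mulrBr ac mulr1.
  rewrite expRB invfM -/a -mulrA (mulrA _ (expR 1)) mulVf ?gt_eqF ?expR_gt0 // mul1r.
  apply: ler_wpM2l; first exact: ltW.
  rewrite lef_pV2 ?posrE ?expR_gt0 ?addr_gt0 //; exact: expR_ge1Dx.
- have : (p%:E <= 0%:E)%E.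
    apply: le_trans Hx; rewrite -[X in (X <= _)%E]mule1.
    by apply: lee_wpmul2l; rewrite ?lee_fin.
  rewrite lee_fin => pl0; have -> : p = 0 by apply/eqP; rewrite eq_le pl0 p0.
  by rewrite mul0e mul0r.
- by move: (le_trans CW1 CWx).
Qed.
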